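(* Let $B(z)=\frac{1-\sqrt{1-4z}}{2z}=\sum_{n\ge0}\frac{1}{n+1}\binom{2n}{n}z^n$ be the generating function of binary trees counted by the number of inner nodes. Then \[ B(z)=1+\frac{z}{1-2z}\,B\Big(\frac{z^2}{(1-2z)^2}\Big). \]
   Context: A binary tree is either a leaf $\square$ or a root (an inner node) together with an ordered pair (left, right) of subtrees which are binary trees. The size of a binary tree is its number of inner nodes. *)

(* Defs.v *)
From Stdlib Require Import Reals.
From Coquelicot Require Import Coquelicot.
Open Scope R_scope.

Definition bcoef (n : nat) : R := / INR (S n) * Binomial.C (2 * n) n.

(* The generating function B(z) = sum_{n>=0} bcoef n * z^n,
   as a real function (convergent for |z| < 1/4). *)
Definition B (z : R) : R := Series (fun n => bcoef n * z ^ n).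

(* Main.v *)
Require Import Defs.
From Stdlib Require Import Reals Lra Lia.
From Coquelicot Require Import Coquelicot.
Open Scope R_scope.

Lemma bcoef_0 : bcoef 0 = 1.
Proof. unfold bcoef, Binomial.C. simpl. field. Qed.

Lemma bcoef_S n : INR (n+2) * bcoef (S n) = (4 * INR n + 2) * bcoef n.
Proof.
  unfold bcoef, Binomial.C.
  replace (2 * S n)%nat with (S (S (2 * n))) by lia.
  replace (S (S (2 * n)) - S n)%nat with (S n) by lia.
  replace (2 * n - n)%nat with n by lia.
  rewrite !fact_simpl, !mult_INR, !plus_INR, !S_INR, mult_INR.
  simpl (INR 2).
  assert (H1 := INR_fact_neq_0 n). assert (H2 := INR_fact_neq_0 (2*n)).
  assert (H3 := pos_INR n).
  simpl (INR 0). field; repeat split; try lra; auto.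
Qed.

Lemma bcoef_pos n : 0 < bcoef n.
Proof.
  induction n. rewrite bcoef_0; lra.
  assert (H := bcoef_S n). assert (H3 := pos_INR n).
  rewrite plus_INR in H; simpl (INR 2) in H.
  assert (bcoef (S n) = (4 * INR n + 2) * bcoef n / (INR n + 2)) as ->.
  { rewrite <- H. field. lra. }
  apply Rdiv_lt_0_compat; [apply Rmult_lt_0_compat|]; lra.
Qed.

Lemma bcoef_le n : bcoef n <= 4 ^ n.
Proof.
  induction n. rewrite bcoef_0; simpl; lra.
  assert (H := bcoef_S n). assert (H3 := pos_INR n).
  assert (Hp := bcoef_pos n).
  rewrite plus_INR in H; simpl (INR 2) in H.
  assert (bcoef (S n) = (4 * INR n + 2) * bcoef n / (INR n + 2)) as ->.
  { rewrite <- H. field. lra. }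
  simpl. apply Rle_trans with (4 * bcoef n); [|lra].
  apply Rmult_le_reg_r with (INR n + 2); [lra|].
  unfold Rdiv. rewrite Rmult_assoc, Rinv_l by lra. nra.
Qed.

Lemma radius : Rbar_le (/4) (CV_radius bcoef).
Proof.
  destruct (CV_radius_bounded bcoef) as [Hub _].
  apply Hub. exists 1. intro n.
  rewrite Rabs_right.
  2:{ apply Rle_ge, Rmult_le_pos. left; apply bcoef_pos. apply pow_le; lra. }
  apply Rle_trans with (4 ^ n * (/4) ^ n).
  apply Rmult_le_compat_r. apply pow_le; lra. apply bcoef_le.
  rewrite <- Rpow_mult_distr. replace (4 * /4) with 1 by field. rewrite pow1; lra.
Qed.

Lemma inside x : Rabs x < /4 -> Rbar_lt (Rabs x) (CV_radius bcoef).
Proof.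
  intro H. generalize radius. destruct (CV_radius bcoef); simpl; auto; lra.
Qed.

Definition delta (n : nat) : R := match n with O => 1 | _ => 0 end.

Lemma delta_series x : is_pseries delta x 1.
Proof.
  apply is_pseries_R. apply is_series_decr_1.
  simpl. match goal with |- is_series _ ?l => replace l with 0 end.
  2:{ unfold plus, opp; simpl; unfold plus, opp; simpl. ring. }
  unfold is_series. apply filterlim_ext with (fun _ => 0).
  - intro n. induction n. simpl. rewrite sum_O. ring.
    rewrite sum_Sn, <- IHn. unfold plus; simpl. ring.
  - apply filterlim_const.
Qed.

Lemma ode x : Rabs x < /4 ->
  (1 - 4 * x) * (PSeries bcoef x + x * PSeries (PS_derive bcoef) x)
  + 2 * x * PSeries bcoef x = 1.
Proof.
  intro Hx. assert (Hin := inside x Hx).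
  assert (Pa := PSeries_correct _ _ (CV_radius_inside _ _ Hin)).
  assert (Pd := PSeries_correct _ _ (ex_pseries_derive _ _ Hin)).
  set (P := PSeries bcoef x) in *. set (D := PSeries (PS_derive bcoef) x) in *.
  assert (Pe := is_pseries_incr_1 _ _ _ Pd).
  assert (Pa1 := is_pseries_incr_1 _ _ _ Pa).
  assert (Pe1 := is_pseries_incr_1 _ _ _ Pe).
  assert (Hc : forall c : R, mult x c = mult c x) by (intro; apply Rmult_comm).
  assert (Q := is_pseries_plus _ _ _ _ _ Pa (is_pseries_plus _ _ _ _ _ Pe
     (is_pseries_plus _ _ _ _ _ (is_pseries_scal (-2) _ _ _ (Hc _) Pa1)
         (is_pseries_scal (-4) _ _ _ (Hc _) Pe1)))).
  apply (is_pseries_ext _ delta) in Q.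
  2:{ intro n. destruct n as [|m].
      - unfold PS_plus, PS_scal, PS_incr_1, delta. simpl. rewrite bcoef_0.
        unfold plus, scal, zero; simpl. unfold plus, mult, zero; simpl. ring.
      - destruct m as [|k].
        + unfold PS_plus, PS_scal, PS_incr_1, PS_derive, delta. simpl.
          assert (H := bcoef_S 0). rewrite bcoef_0 in H. simpl in H.
          unfold plus, scal, zero; simpl. unfold plus, mult, zero; simpl. rewrite bcoef_0; lra.
        + unfold PS_plus, PS_scal, PS_incr_1, PS_derive, delta.
          assert (H := bcoef_S (S k)). rewrite plus_INR in H.
          rewrite !S_INR in *. simpl (INR 2) in H.
          unfold plus, scal, zero; simpl. unfold plus, mult, zero; simpl. simpl (INR 0) in H. lra. }
  apply is_pseries_unique in Q. rewrite (is_pseries_unique _ _ _ (delta_series x)) in Q.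
  unfold plus, scal in Q; simpl in Q. unfold plus, mult in Q; simpl in Q. lra.
Qed.

Definition kf (t : R) := (2 * t * PSeries bcoef t - 1) / sqrt (1 - 4 * t).

Lemma kf_deriv y : Rabs y < /4 -> is_derive kf y 0.
Proof.
  intro Hy. assert (Hin := inside y Hy).
  assert (Hy4 : 0 < 1 - 4 * y) by (apply Rabs_def2 in Hy; lra).
  assert (H1 : is_derive (fun t => 2*t*PSeries bcoef t - 1) y
                 (2*(PSeries bcoef y + y*PSeries (PS_derive bcoef) y))).
  { auto_derive. apply ex_derive_PSeries; auto. rewrite Derive_PSeries; auto; ring. }
  assert (H2 : is_derive (fun t => sqrt (1 - 4*t)) y (-2 / sqrt (1 - 4*y))).
  { auto_derive. lra. replace (1 + - (4*y)) with (1 - 4*y) by ring. field. apply Rgt_not_eq, sqrt_lt_R0; lra. }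
  assert (Hs : sqrt (1 - 4*y) <> 0) by (apply Rgt_not_eq, sqrt_lt_R0; lra).
  assert (H := is_derive_div _ _ _ _ _ H1 H2 Hs).
  unfold kf. eapply is_derive_ext. intro; reflexivity.
  cbv beta in H. match type of H with is_derive _ _ ?l => replace 0 with l; [exact H|] end.
  assert (E := ode y Hy).
  set (P := PSeries bcoef y) in *. set (D := PSeries (PS_derive bcoef) y) in *.
  set (s := sqrt (1 - 4*y)) in *.
  assert (ss : s * s = 1 - 4*y) by (apply sqrt_sqrt; lra).
  replace (2 * (P + y * D) * s - (2 * y * P - 1) * (-2 / s))
    with (2 * ((P + y*D) * (s*s) + 2*y*P - 1) / s) by (field; auto).
  rewrite ss. replace ((P + y * D) * (1 - 4 * y) + 2 * y * P - 1) with 0 by lra.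
  field; auto.
Qed.

Lemma closed z : Rabs z < /4 -> 2 * z * B z - 1 = - sqrt (1 - 4 * z).
Proof.
  intro Hz.
  assert (Hbd : forall x, Rmin 0 z <= x <= Rmax 0 z -> Rabs x < /4).
  { intros x [Ha Hb]. unfold Rmin, Rmax in *.
    destruct (Rle_dec 0 z); apply Rabs_def2 in Hz; apply Rabs_def1; lra. }
  destruct (MVT_gen kf 0 z (fun _ => 0)) as [c [_ Hc]].
  - intros x Hx. apply kf_deriv, Hbd; lra.
  - intros x Hx. apply continuity_pt_filterlim.
    apply (ex_derive_continuous kf). exists 0. apply kf_deriv, Hbd; lra.
  - assert (Hz4 : 0 < 1 - 4 * z) by (apply Rabs_def2 in Hz; lra).
    assert (Hs : 0 < sqrt (1 - 4*z)) by (apply sqrt_lt_R0; lra).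
    unfold kf in Hc. rewrite PSeries_0 in Hc. 
    replace (1 - 4 * 0) with 1 in Hc by ring. rewrite sqrt_1 in Hc.
    unfold B. change (Series (fun n => bcoef n * z ^ n)) with (PSeries bcoef z).
    set (s := sqrt (1 - 4 * z)) in *.
    assert (E : (2 * z * PSeries bcoef z - 1) / s = -1) by lra.
    apply (Rmult_eq_compat_r s) in E. unfold Rdiv in E.
    rewrite Rmult_assoc, Rinv_l in E by lra. lra.
Qed.

Lemma sq_lt z : Rabs z < /4 -> Rabs (z ^ 2 / (1 - 2 * z) ^ 2) < /4.
Proof.
  intro Hz. apply Rabs_def2 in Hz.
  assert (H1 : 1/2 < 1 - 2*z) by lra.
  assert (H0 : 0 <= z ^ 2 / (1 - 2 * z) ^ 2).
  { unfold Rdiv. apply Rmult_le_pos. apply pow2_ge_0. left; apply Rinv_0_lt_compat, pow_lt; lra. }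
  rewrite Rabs_right by lra.
  apply Rmult_lt_reg_r with ((1 - 2*z)^2). apply pow_lt; lra.
  unfold Rdiv. rewrite Rmult_assoc, Rinv_l by (apply pow_nonzero; lra).
  simpl. nra.
Qed.

Theorem proposition1 (z : R) (hz : Rabs z < / 4) :
  B z = 1 + z / (1 - 2 * z) * B (z ^ 2 / (1 - 2 * z) ^ 2).
Proof.
  destruct (Req_dec z 0) as [H0|H0].
  - subst. unfold Rdiv. rewrite !Rmult_0_l. rewrite Rplus_0_r.
    unfold B. change (Series (fun n => bcoef n * 0 ^ n)) with (PSeries bcoef 0).
    rewrite PSeries_0, bcoef_0. reflexivity.
  - assert (Hw := sq_lt z hz).
    assert (Cz := closed z hz). assert (Cw := closed _ Hw).
    set (w := z ^ 2 / (1 - 2 * z) ^ 2) in *.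
    apply Rabs_def2 in hz.
    assert (H1 : 0 < 1 - 2*z) by lra.
    assert (Hz4 : 0 < 1 - 4 * z) by lra.
    assert (Hsw : sqrt (1 - 4 * w) = sqrt (1 - 4*z) / (1 - 2*z)).
    { replace (1 - 4 * w) with (Rsqr (sqrt (1 - 4*z) / (1 - 2*z))).
      apply sqrt_Rsqr. unfold Rdiv. apply Rmult_le_pos. apply sqrt_pos.
      left; apply Rinv_0_lt_compat; lra.
      unfold Rsqr, w. unfold Rdiv.
      replace (sqrt (1 - 4 * z) * / (1 - 2 * z) * (sqrt (1 - 4 * z) * / (1 - 2 * z)))
        with ((sqrt (1 - 4 * z) * sqrt (1 - 4 * z)) * / ((1 - 2*z)^2)) by (field; lra).
      rewrite sqrt_sqrt by lra. field. lra. }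
    rewrite Hsw in Cw.
    assert (Hwz : w <> 0).
    { unfold w. unfold Rdiv. apply Rmult_integral_contrapositive. split.
      apply pow_nonzero; auto. apply Rinv_neq_0_compat, pow_nonzero; lra. }
    set (s := sqrt (1 - 4 * z)) in *.
    assert (Bz : B z = (1 - s) / (2 * z)).
    { replace (1 - s) with (2*z*B z) by lra. field. auto. }
    assert (Bw : B w = (1 - s / (1 - 2*z)) / (2 * w)).
    { replace (1 - s / (1 - 2*z)) with (2*w*B w) by lra. field. auto. }
    rewrite Bz, Bw. unfold w. field. split; lra.
Qed.
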